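(* In the $m$-type setting described in the context: (1) if $x_i>1$ for every type $i$, then diffusion occurs from a small seed; (2) if $x_i\le1$ for every type $i$, then diffusion does not occur from a small seed; (3) if there is some type $i$ with $\pi_{ii}x_i>1$, then diffusion occurs from a small seed; (4) if there is a nonempty subset of types $S\subseteq\{1,\dots,m\}$ such that $\sum_{j\in S}\pi_{ij}x_j>1$ for each $i\in S$, then diffusion occurs from a small seed.
   Context: There are $m\ge1$ types. $\Pi=(\pi_{ij})$ is a nonnegative row-stochastic primitive $m\times m$ matrix ($\pi_{ij}$ is the probability that a meeting of a type-$i$ agent is with a type-$j$ agent). For each type $i$: $P_i$ is a degree distribution on the nonnegative integers; $w_i(d)>0$ are degree weights; $f_i(d,a)$, $g_i(d,a)$ ($0\le a\le d$) are adoption and abandonment rates satisfying: $f_i(d,0)=0$; $f_i(d,a)$ nondecreasing in $a$; $f_i(d,1)>0$ for some $d$ with $P_i(d)>0$; $g_i(d,0)>0$; $g_i(d,a)$ nonincreasing in $a$. Let $x_i=\sum_dP_i(d)w_i(d)\,d\,\frac{f_i(d,1)}{g_i(d,0)}$, assumed finite; it is positive. $A$ is the $m\times m$ matrix with $A_{ij}=\pi_{ij}x_j$. Diffusion occurs from a small seed means: for every $\varepsilon>0$ there exists $v\in\mathbb{R}^m$ with $0<v_i<\varepsilon$ and $(Av)_i>v_i$ for all $i$. (The condition $x_i>1$ corresponds to diffusion within type $i$ when isolated.) *)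

(* Defs.v *)
From HB Require Import structures.
From mathcomp Require Import all_boot all_order all_algebra.
From mathcomp Require Import all_classical all_reals all_analysis.
Set Implicit Arguments. Unset Strict Implicit. Unset Printing Implicit Defensive.
Import Order.TTheory GRing.Theory Num.Theory.
Import numFieldNormedType.Exports.
Local Open Scope ring_scope.
Local Open Scope classical_set_scope.

Definition row_stochastic (R : realType) (m : nat) (Pi : 'M[R]_m) : Prop :=
  (forall i j, 0 <= Pi i j) /\ (forall i, \sum_j Pi i j = 1).

(* k-th matrix power (works for any m, including m not of the form n.+1) *)
Definition mxpow (R : realType) (m : nat) (A : 'M[R]_m) (k : nat) : 'M[R]_m :=
  iter k (mulmx A) 1%:M.

Definition primitive (R : realType) (m : nat) (A : 'M[R]_m) : Prop :=
  exists k, (0 < k)%N /\ forall i j, 0 < mxpow A k i j.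

Definition degree_distribution (R : realType) (P : nat -> R) : Prop :=
  (forall d, 0 <= P d) /\ series P @ \oo --> (1 : R^o).

Definition xterm (R : realType) (P w : nat -> R) (f g : nat -> nat -> R)
  (d : nat) : R := P d * w d * d%:R * f d 1%N / g d 0%N.

Definition xval (R : realType) (P w : nat -> R) (f g : nat -> nat -> R) : R :=
  limn (series (xterm P w f g)).

Definition Amx (R : realType) (m : nat) (Pi : 'M[R]_m) (x : 'I_m -> R) : 'M[R]_m :=
  \matrix_(i, j) (Pi i j * x j).

Definition diffusion_small_seed (R : realType) (m : nat) (A : 'M[R]_m) : Prop :=
  forall eps : R, 0 < eps ->
    exists v : 'cV[R]_m, forall i,
      0 < v i 0 < eps /\ v i 0 < (A *m v) i 0.

(* Main.v *)
Require Import Defs.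
From HB Require Import structures.
From mathcomp Require Import all_boot all_order all_algebra.
From mathcomp Require Import all_classical all_reals all_analysis.
Import Order.TTheory GRing.Theory Num.Theory.
Import numFieldNormedType.Exports.
Local Open Scope ring_scope.

Lemma sum_pos (R : realType) m (F : 'I_m -> R) j :
  (forall j, 0 <= F j) -> 0 < F j -> 0 < \sum_j F j.
Proof.
move=> F0 Fj; rewrite (bigD1 j) //=; apply: (lt_le_trans Fj).
by rewrite lerDl sumr_ge0.
Qed.

Lemma le_sum_one (R : realType) m (F : 'I_m -> R) j :
  (forall j, 0 <= F j) -> F j <= \sum_j F j.
Proof.
move=> F0; rewrite (bigD1 j) //=.
by rewrite lerDl sumr_ge0.
Qed.

Lemma scale_seed (R : realType) m (A : 'M[R]_m) (v : 'cV[R]_m) :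
  (forall i, 0 < v i 0 /\ v i 0 < (A *m v) i 0) -> diffusion_small_seed A.
Proof.
move=> hv eps eps0.
set s := 1 + \sum_i v i 0.
have s0 : 0 < s by rewrite /s ltr_pwDl // sumr_ge0 // => i _; exact/ltW/(hv i).1.
set c := eps / s.
have c0 : 0 < c by rewrite divr_gt0.
exists (c *: v) => i; rewrite -scalemxAr !mxE.
have [vi Avi] := hv i.
split; [apply/andP; split|].
- by rewrite mulr_gt0.
- have : v i 0 < s.
    rewrite /s (le_lt_trans (@le_sum_one _ _ (fun j => v j 0) i _)) ?ltrDr //.
    by move=> j; exact/ltW/(hv j).1.
  move=> vis; rewrite /c mulrAC ltr_pdivrMr // (ltr_pM2l eps0) //.
- by rewrite ltr_pM2l //; move: Avi; rewrite mxE.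
Qed.

Lemma mxpow_comm (R : realType) m (A : 'M[R]_m) k :
  mxpow A k *m A = A *m mxpow A k.
Proof.
elim: k => [|k IH] /=; first by rewrite /mxpow /= mul1mx mulmx1.
rewrite /mxpow /= -/(mxpow A k) -mulmxA IH //.
Qed.

Lemma mxpow_pos (R : realType) m (Pi A : 'M[R]_m) :
  (forall i j, 0 <= Pi i j) -> (forall i j, 0 <= A i j) ->
  (forall i j, 0 < Pi i j -> 0 < A i j) ->
  forall k, (forall i j, 0 <= mxpow A k i j) /\
            (forall i j, 0 < mxpow Pi k i j -> 0 < mxpow A k i j).
Proof.
move=> P0 A0 PA; elim=> [|k [IH1 IH2]].
  by split=> i j; rewrite /mxpow /= !mxE //; case: (i == j).
have Pk0 : forall i j, 0 <= mxpow Pi k i j.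
  elim: k {IH1 IH2} => [|k IHk] i j; first by rewrite /mxpow /= !mxE; case: (i == j).
  rewrite /mxpow /= -/(mxpow Pi k) mxE; apply: sumr_ge0 => l _.
  by rewrite mulr_ge0.
split=> i j; rewrite /mxpow /= -/(mxpow A k) -/(mxpow Pi k) !mxE.
  by apply: sumr_ge0 => l _; rewrite mulr_ge0.
move=> hP.
have [l hl] : exists l, 0 < Pi i l * mxpow Pi k l j.
  apply/not_existsP => hn; move: hP; rewrite big1 ?ltxx // => l _.
  apply/eqP; rewrite eq_le mulr_ge0 // andbT leNgt; exact/negP/hn.
have Pil : 0 < Pi i l.
  rewrite lt_def P0 andbT; apply/eqP => e; by move: hl; rewrite e mul0r ltxx.
have Plj : 0 < mxpow Pi k l j.
  rewrite lt_def Pk0 andbT; apply/eqP => e; by move: hl; rewrite e mulr0 ltxx.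
apply: (@sum_pos _ _ (fun l => A i l * mxpow A k l j) l).
  by move=> l'; rewrite mulr_ge0.
by rewrite mulr_gt0 // ?PA // IH2.
Qed.

Lemma xval_pos (R : realType) (P w : nat -> R) (f g : nat -> nat -> R) :
  degree_distribution P -> (forall d, 0 < w d) -> (forall d, f d 0%N = 0) ->
  (forall d a b, (a <= b <= d)%N -> f d a <= f d b) ->
  (exists d, (1 <= d)%N /\ 0 < P d /\ 0 < f d 1%N) ->
  (forall d, 0 < g d 0%N) ->
  cvgn (series (xterm P w f g)) -> 0 < xval P w f g.
Proof.
move=> [P0 _] hw hf0 hfm [d [d1 [Pd fd]]] hg hcv.
have t0 : forall n, 0 <= xterm P w f g n.
  move=> [|n]; first by rewrite /xterm mulr0 mul0r mul0r.
  rewrite /xterm; apply: divr_ge0; last exact: ltW (hg _).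
  apply: mulr_ge0; last by rewrite -(hf0 n.+1); exact: hfm.
  apply: mulr_ge0 => //; apply: mulr_ge0 => //; exact: ltW.
have nd : nondecreasing_seq (series (xterm P w f g)).
  by apply/nondecreasing_seqP => n; rewrite seriesSr lerDl.
have s0 : 0 <= series (xterm P w f g) d.
  apply: (le_trans _ (nd 0%N d _)) => //.
  by rewrite seriesEnat /= big_geq.
apply: (lt_le_trans _ (nondecreasing_cvgn_le nd hcv d.+1)).
rewrite seriesSr; apply: ltr_wpDl => //.
rewrite /xterm divr_gt0 // mulr_gt0 // mulr_gt0 // ?mulr_gt0 //.
by rewrite ltr0n.
Qed.

Theorem corollary3 (R : realType) (m : nat) (Pi : 'M[R]_m)
  (P w : 'I_m -> nat -> R) (f g : 'I_m -> nat -> nat -> R) :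
  (0 < m)%N ->
  row_stochastic Pi ->
  primitive Pi ->
  (forall i, degree_distribution (P i)) ->
  (forall i d, 0 < w i d) ->
  (forall i d, f i d 0%N = 0) ->
  (forall i d a b, (a <= b <= d)%N -> f i d a <= f i d b) ->
  (forall i, exists d, (1 <= d)%N /\ 0 < P i d /\ 0 < f i d 1%N) ->
  (forall i d, 0 < g i d 0%N) ->
  (forall i d a b, (a <= b <= d)%N -> g i d b <= g i d a) ->
  (forall i, cvgn (series (xterm (P i) (w i) (f i) (g i)))) ->
  let x := fun i => xval (P i) (w i) (f i) (g i) in
  let A := Amx Pi x in
  [/\ (forall i, 1 < x i) -> diffusion_small_seed A,
      (forall i, x i <= 1) -> ~ diffusion_small_seed A,
      (exists i, 1 < Pi i i * x i) -> diffusion_small_seed A &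
      (exists S : {set 'I_m}, S != finset.set0 /\
         forall i, i \in S -> 1 < \sum_(j in S) Pi i j * x j) ->
        diffusion_small_seed A].
Proof.
move=> m0 [P0 Psum] [k [k0 Pk]] hP hw hf0 hfm hex hg hgm hcv x A.
have xpos : forall i, 0 < x i.
  move=> i; rewrite /x; apply: xval_pos.
  - exact: hP.
  - exact: hw.
  - exact: hf0.
  - exact: hfm.
  - exact: hex.
  - exact: hg.
  - exact: hcv.
have A0 : forall i j, 0 <= A i j by move=> i j; rewrite mxE mulr_ge0 // ltW.
have PA : forall i j, 0 < Pi i j -> 0 < A i j by move=> i j h; rewrite mxE mulr_gt0.
set B := mxpow A k.
have Bpos : forall i j, 0 < B i j := fun i j => (@mxpow_pos _ _ _ _ P0 A0 PA k).2 _ _ (Pk i j).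
have part4 : forall S : {set 'I_m}, S != finset.set0 ->
    (forall i, i \in S -> 1 < \sum_(j in S) Pi i j * x j) -> diffusion_small_seed A.
  move=> S SN hS.
  have [j0 j0S] : exists j0, j0 \in S by case/set0Pn: SN => j ?; exists j.
  set u : 'cV[R]_m := \col_i (if i \in S then 1 else 0).
  have hAu : forall j, (A *m u) j 0 = \sum_(l in S) Pi j l * x l.
    move=> j; rewrite mxE [RHS]big_mkcond; apply: eq_bigr => l _.
    by rewrite !mxE; case: ifP => _; rewrite ?mulr1 ?mulr0.
  have hsub : forall j, (A *m u - u) j 0 = (A *m u) j 0 - u j 0.
    by move=> j; rewrite mxE [(- u) j 0]mxE.
  have hd : forall j, 0 <= (A *m u - u) j 0.
    move=> j; rewrite hsub hAu mxE; case: ifP => jS.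
      by rewrite subr_ge0 ltW // hS.
    by rewrite subr0 sumr_ge0 // => l _; rewrite mulr_ge0 // ltW.
  have hd0 : 0 < (A *m u - u) j0 0.
    by rewrite hsub hAu mxE j0S subr_gt0 hS.
  have e : A *m (B *m u) - B *m u = B *m (A *m u - u).
    by rewrite mulmxBr mulmxA -mxpow_comm -mulmxA.
  apply: (@scale_seed _ _ A (B *m u)) => i; split.
  - rewrite mxE; apply: (@sum_pos _ _ (fun j => B i j * u j 0) j0).
      by move=> j; apply: mulr_ge0; [exact: ltW | rewrite mxE; case: ifP => _ //; exact: ler01].
    by rewrite mxE j0S mulr1.
  - rewrite -subr_gt0.
    have -> : (A *m (B *m u)) i 0 - (B *m u) i 0 = (B *m (A *m u - u)) i 0.
      by rewrite -e [in RHS]mxE [(- (B *m u)) i 0]mxE.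
    rewrite mxE; apply: (@sum_pos _ _ (fun j => B i j * (A *m u - u) j 0) j0).
      by move=> j; apply: mulr_ge0 => //; exact: ltW.
    by rewrite mulr_gt0.
split.
- move=> h; apply: (part4 [set: 'I_m]%SET).
    by apply/set0Pn; exists (Ordinal m0); rewrite finset.in_setT.
  move=> i _.
  rewrite (eq_bigl (fun _ => true)); last by move=> j; rewrite finset.in_setT.
  rewrite -{1}(Psum i) -subr_gt0 -sumrB.
  have [j hj] : exists j, 0 < Pi i j.
    apply/not_existsP => hn; move: (Psum i); rewrite big1 => [/eqP|j _].
      by rewrite eq_sym oner_eq0.
    apply/eqP; rewrite eq_le P0 andbT leNgt; exact/negP/hn.
  apply: (@sum_pos _ _ (fun j => Pi i j * x j - Pi i j) j).
    by move=> l; rewrite -{2}(mulr1 (Pi i l)) -mulrBr mulr_ge0 // subr_ge0 ltW.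
  by rewrite -{2}(mulr1 (Pi i j)) -mulrBr mulr_gt0 // subr_gt0.
- move=> h hd.
  have [v hv] := hd 1 ltr01.
  pose i0 : 'I_m := Ordinal m0.
  case: (@arg_maxP _ _ _ i0 xpredT (fun i => v i 0) isT) => im _ hmax.
  have [/andP [vi _] hvi] := hv im.
  move: hvi; rewrite mxE; apply/negP; rewrite -leNgt.
  rewrite -[leRHS]mulr1 -(Psum im) mulr_sumr; apply: ler_sum => j _.
  rewrite mxE -mulrA [leRHS]mulrC; apply: ler_wpM2l; first exact: P0.
  have [/andP [vj _] _] := hv j.
  apply: (le_trans (ler_piMl (ltW vj) (h j))).
  exact: hmax.
- case=> i hi; apply: (part4 [set i]%SET).
    by apply/set0Pn; exists i; rewrite finset.set11.
  by move=> j; rewrite finset.in_set1 => /eqP ->; rewrite finset.big_set1.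
- by case=> S [SN hS]; apply: part4 SN hS.
Qed.
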